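(* Let $n\ge 1$, $y\in\mathbb{R}^n$ and $\omega\in\mathbb{R}^n$ with $\omega_i>0$ for all $i$. Consider the isotonic regression problem $$\min_{\theta\in\mathbb{R}^n}\ \tfrac12\sum_{i=1}^n \omega_i(y_i-\theta_i)^2\quad\text{subject to}\quad \theta_1\le\theta_2\le\cdots\le\theta_n. \tag{IR}$$ If the PDAS algorithm for isotonic regression (described in the context below) is applied to (IR) from an arbitrary initial partition $J_0$, then it terminates and returns the optimal solution of (IR), using $\mathcal{O}(n)$ elementary arithmetic operations in total.
   Context: A partition $J$ of $\{1,\dots,n\}$ is a collection of ordered blocks $B_1,B_2,\dots$, each consisting of consecutive indices $\{p,p+1,\dots,q\}$ with $p\le q$, listed from left to right. For a block $B$, $B_-$ (resp. $B_+$) denotes its immediate predecessor (resp. successor) block, taken to be $\emptyset$ if $B$ is the first (resp. last) block. For $i\in B=\{p,\dots,q\}\in J$, set $L_i=\{p,\dots,i\}$ and $U_i=\{i+1,\dots,q\}$. PDAS algorithm for isotonic regression: (1) Input an arbitrary initial partition $J_0$. For each block $B=\{p,\dots,q\}\in J_0$ and each $i\in B$, set $\theta_i=\big(\sum_{j\in B}\omega_jy_j\big)/\big(\sum_{j\in B}\omega_j\big)$, and define $z_i$ by: $z_i=\omega_i(y_i-\theta_i)$ if $i=p$; $z_i=0$ if $i=q\ne n$; $z_i=z_{i-1}+\omega_i(y_i-\theta_i)$ otherwise. (2) Set $J_1=J_0$, and for each index $i$ with $z_i<0$, split the block $B\in J_1$ containing $i$ into the two blocks $L_i$ and $U_i$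 (so each block of $J_0$ is cut immediately after every such index $i$). (3) For each $B\in J_1$ set $\alpha_B=\sum_{i\in B}\omega_iy_i$, $\beta_B=\sum_{i\in B}\omega_i$, $\mu_B=\alpha_B/\beta_B$. (4) For $k=1,2,\dots$: initialize $J_{k+1}=J_k$; for every maximal run of consecutive blocks $B_s,B_{s+1},\dots,B_t$ of $J_k$ (with $t>s$) satisfying $\mu_{B_{s-1}}\le\mu_{B_s}>\mu_{B_{s+1}}>\cdots>\mu_{B_t}\le\mu_{B_{t+1}}$ (conditions involving a nonexistent block $B_{s-1}$ or $B_{t+1}$ being dropped), replace $B_s,\dots,B_t$ in $J_{k+1}$ by the single merged block $N=\bigcup_{j=s}^tB_j$, with $\alpha_N=\sum_{j=s}^t\alpha_{B_j}$, $\beta_N=\sum_{j=s}^t\beta_{B_j}$, $\mu_N=\alpha_N/\beta_N$. If $J_{k+1}=J_k$, stop. (5) Output $\theta$ given by $\theta_i=\mu_B$ for every $i\in B$ and every block $B$ of the final partition. *)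

(* Defs.v *)
(* the algorithm is purely algebraic/order-theoretic, so it is
   stated over an arbitrary real field R (this covers the real numbers). *)
From HB Require Import structures.
From mathcomp Require Import all_boot all_order all_algebra.
Set Implicit Arguments.
Unset Strict Implicit.
Unset Printing Implicit Defensive.
Import Order.TTheory GRing.Theory Num.Theory.
Local Open Scope ring_scope.

(* Indices are 0-based: the paper's index i corresponds to i-1 here, so the
   index set is {0,...,n-1}.  A block {p,...,q} is the pair (p,q).            *)

Fixpoint valid_from (k n : nat) (J : seq (nat * nat)) : bool :=
  match J with
  | [::] => k == n
  | (p, q) :: J' => [&& p == k, (p <= q)%N & valid_from q.+1 n J']
  end.

Definition is_partition (n : nat) (J : seq (nat * nat)) : bool := valid_from 0 n J.

Definition ir_obj (R : realFieldType) (n : nat) (y w th : nat -> R) : R :=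
  (\sum_(i < n) w i * (y i - th i) ^+ 2) / 2.

Definition monotone (R : realFieldType) (n : nat) (th : nat -> R) : Prop :=
  forall i : nat, (i.+1 < n)%N -> th i <= th i.+1.

Section PDAS.
Variable R : realFieldType.
Variables (n : nat) (y w : nat -> R).

Definition bsum (p q : nat) (f : nat -> R) : R := \sum_(p <= j < q.+1) f j.

Definition theta0 (B : nat * nat) : R :=
  bsum B.1 B.2 (fun j => w j * y j) / bsum B.1 B.2 w.

Definition zval (B : nat * nat) (i : nat) : R :=
  if (i == B.2) && (B.2 != n.-1)%N then 0
  else \sum_(B.1 <= j < i.+1) w j * (y j - theta0 B).

(* Step (2): cut a block {p..q} immediately after each index i (p <= i < q)
   with c i; cutting after q would leave an empty U_q, so nothing happens. *)
Fixpoint cutb (c : nat -> bool) (s q : nat) (idx : seq nat) : seq (nat * nat) :=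
  match idx with
  | [::] => [:: (s, q)]
  | i :: idx' => if c i then (s, i) :: cutb c i.+1 q idx' else cutb c s q idx'
  end.

Definition cut_block (B : nat * nat) : seq (nat * nat) :=
  cutb (fun i => zval B i < 0) B.1 B.2 (iota B.1 (B.2 - B.1)).

Definition J1 (J0 : seq (nat * nat)) : seq (nat * nat) := flatten (map cut_block J0).

Record blk := Blk { bp : nat; bq : nat; ba : R; bb : R }.

Definition mu (b : blk) : R := ba b / bb b.

Definition init_blk (B : nat * nat) : blk :=
  Blk B.1 B.2 (bsum B.1 B.2 (fun j => w j * y j)) (bsum B.1 B.2 w).

Fixpoint runs (l : seq blk) : seq (seq blk) :=
  match l with
  | [::] => [::]
  | b :: l' =>
      match runs l' with
      | (c :: r) :: gs =>
          if mu c < mu b then (b :: c :: r) :: gs else [:: b] :: (c :: r) :: gs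
      | gs => [:: b] :: gs
      end
  end.

Definition merge_run (r : seq blk) : blk :=
  match r with
  | [::] => Blk 0 0 0 1
  | [:: b] => b
  | b :: r' => Blk (bp b) (bq (last b r')) (\sum_(c <- r) ba c) (\sum_(c <- r) bb c)
  end.

Definition pdas_step (J : seq blk) : seq blk := map merge_run (runs J).

(* J_{k+1} (k >= 0):  Jk J0 k is the partition J_{k+1} of the paper. *)
Definition Jk (J0 : seq (nat * nat)) (k : nat) : seq blk :=
  iter k pdas_step (map init_blk (J1 J0)).

Definition parts (J : seq blk) : seq (nat * nat) := map (fun b => (bp b, bq b)) J.

Fixpoint theta_of (J : seq blk) (i : nat) : R :=
  match J with
  | [::] => 0
  | b :: J' => if (i <= bq b)%N then mu b else theta_of J' i
  end.

(* Cost model: number of elementary arithmetic operations (+, -, *, /). *)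
(* Step (1) on a block of length L: alpha (L mult, L-1 add), beta (L-1 add),
   theta (1 div), z (L sub, L mult, L-1 add). *)
Definition cost1_block (B : nat * nat) : nat :=
  let L := (B.2 - B.1).+1 in (L + L.-1 + L.-1 + 1 + (L + L + L.-1))%N.
(* Step (3) on a block of length L: alpha, beta, mu. *)
Definition cost3_block (B : nat * nat) : nat :=
  let L := (B.2 - B.1).+1 in (L + L.-1 + L.-1 + 1)%N.
(* Step (4): merging a run of m >= 2 blocks: (m-1) adds for alpha_N, (m-1) for
   beta_N, 1 division for mu_N. *)
Definition cost_run (r : seq blk) : nat :=
  if (2 <= size r)%N then ((size r).-1 + (size r).-1 + 1)%N else 0%N.
Definition cost_step (J : seq blk) : nat := sumn (map cost_run (runs J)).

(* Total cost when the loop stops at the iteration producing J_{K+1} = Jk K. *)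
Definition total_cost (J0 : seq (nat * nat)) (K : nat) : nat :=
  (sumn (map cost1_block J0) + sumn (map cost3_block (J1 J0))
   + \sum_(k < K.+1) cost_step (Jk J0 k))%N.

End PDAS.

(* Main.v *)
Require Import Defs.
From HB Require Import structures.
From mathcomp Require Import all_boot all_order all_algebra.
From mathcomp Require Import zify ring lra.
Import Order.TTheory GRing.Theory Num.Theory.
Set Implicit Arguments.
Unset Strict Implicit.
Unset Printing Implicit Defensive.
Local Open Scope ring_scope.

Lemma vf_le k m P : valid_from k m P -> (k <= m)%N.
Proof.
elim: P k => [|[p q] P IH] k /=; first by move/eqP->.
case/and3P=> /eqP-> pq /IH; lia.
Qed.

Lemma vf_cat k m n A B : valid_from k m A -> valid_from m n B ->
  valid_from k n (A ++ B).
Proof.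
elim: A k => [|[p q] A IH] k /=; first by move/eqP->.
by case/and3P=> -> -> /IH H /H ->.
Qed.

Lemma vf_cat_inv k n A B : valid_from k n (A ++ B) ->
  exists m, valid_from k m A /\ valid_from m n B.
Proof.
elim: A k => [|[p q] A IH] k /=; first by move=> H; exists k; split.
case/and3P=> -> -> /IH [m [H1 H2]]; by exists m; rewrite H1.
Qed.

Lemma vf_cost (c : nat * nat -> nat) k n P :
  (forall B, (B.1 <= B.2)%N -> (c B <= 7 * (B.2 - B.1).+1)%N) ->
  valid_from k n P -> (sumn (map c P) <= 7 * (n - k))%N.
Proof.
move=> Hc; elim: P k => [|[p q] P IH] k /=; first by move/eqP->; rewrite subnn.
case/and3P=> /eqP Hp pq H; have := IH q.+1 H; have := vf_le H; have := Hc (p, q) pq.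
rewrite /=; lia.
Qed.

Lemma vf_size k n P : valid_from k n P -> (size P <= n - k)%N.
Proof.
elim: P k => [|[p q] P IH] k /=; first by move=> _.
case/and3P=> /eqP Hp pq H; have := IH q.+1 H; have := vf_le H; lia.
Qed.

Section Runs.
Variable R : realFieldType.
Definition dec : rel (blk R) := fun a c => mu c < mu a.

Fixpoint GroupsOK (gs : seq (seq (blk R))) : Prop :=
  match gs with
  | [::] => True
  | r :: gs' => (exists b r', r = b :: r' /\ path dec b r') /\ GroupsOK gs'
  end.

Lemma runs_head (b : blk R) l : exists r gs, runs (b :: l) = (b :: r) :: gs.
Proof.
rewrite /=; case: (runs l) => [|[|c r] gs]; try by do 2 eexists.
by case: ifP => _; do 2 eexists.
Qed.

Lemma runs_flat (l : seq (blk R)) : flatten (runs l) = l /\ GroupsOK (runs l).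
Proof.
elim: l => [|b l [IH1 IH2]] //=.
case: l IH1 IH2 => [|c l'] IH1 IH2.
  by rewrite /=; split=> //; split=> //; exists b, [::].
have [r [gs E]] := runs_head c l'.
rewrite E in IH1 IH2 *; case: IH2 => [[b0 [r0 [Hr Hp]]] IH2].
case: ifP => Hd /=.
  split; first by rewrite /= in IH1; rewrite IH1.
  split=> //; exists b, (c :: r); split=> //.
  by case: Hr => Hc Hr; subst b0 r0; rewrite /= /dec Hd Hp.
split; first by rewrite /= in IH1; rewrite IH1.
split; first by exists b, [::].
by split=> //; exists b0, r0.
Qed.

Lemma runs_size (l : seq (blk R)) : (size (runs l) <= size l)%N.
Proof.
elim: l => [|b l IH] //=.
case: l IH => [|c l'] IH //.
have [r [gs E]] := runs_head c l'.
rewrite E in IH *; case: ifP => _ /=; rewrite /= in IH; lia.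
Qed.

Lemma runs_eq (l : seq (blk R)) : size (runs l) = size l ->
  map (@merge_run R) (runs l) = l /\ sorted (fun a c => ~~ dec a c) l.
Proof.
elim: l => [|b l IH] //=.
case: l IH => [|c l'] IH //.
have [r [gs E]] := runs_head c l'.
rewrite E in IH *; case: ifP => Hd /=.
  move=> Hs; have := runs_size (c :: l'); rewrite E /=; lia.
case=> Hs; have [IH1 IH2] := IH (f_equal S Hs); split; first by rewrite /= in IH1; rewrite IH1.
by rewrite /= /dec Hd.
Qed.

Lemma cost_runs (l : seq (blk R)) : (cost_step l + 3 * size (runs l) <= 3 * size l)%N.
Proof.
rewrite /cost_step.
elim: l => [|b l IH] //=.
case: l IH => [|c l'] IH //.
have [r [gs E]] := runs_head c l'.
rewrite E in IH *; case: ifP => Hd /=; rewrite /= in IH.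
  move: IH; rewrite /cost_run /=; clear E; case: r => [|d r] /=; lia.
have -> : cost_run [:: b] = 0%N by [].
lia.
Qed.
End Runs.

Section Alg.
Variable R : realFieldType.
Lemma alg1 (a1 a2 b1 b2 x u : R) : 0 < b1 -> 0 < b2 -> 0 <= x ->
  a1 * x <= b1 * u -> a2 * b1 <= a1 * b2 -> (a1 + a2) * x <= (b1 + b2) * u.
Proof.
move=> h1 h2 hx H1 H2.
have H3 : a2 * x <= b2 * u.
  have : b1 * (a2 * x - b2 * u) <= 0.
    have -> : b1 * (a2 * x - b2 * u) = x * (a2 * b1 - a1 * b2) + b2 * (a1 * x - b1 * u) by ring.
    rewrite -[0]addr0; apply: lerD.
      by rewrite mulr_ge0_le0 // subr_le0.
    by rewrite pmulr_rle0 // subr_le0.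
  by rewrite pmulr_rle0 // subr_le0.
lra.
Qed.

Lemma alg2 (a1 a2 b1 b2 x u : R) : 0 < b1 -> 0 < b2 -> x <= b2 ->
  a2 * x <= b2 * u -> a2 * b1 <= a1 * b2 -> (a1 + a2) * (b1 + x) <= (b1 + b2) * (a1 + u).
Proof.
move=> h1 h2 hx H1 H2.
have : 0 <= b2 * ((b1 + b2) * (a1 + u) - (a1 + a2) * (b1 + x)).
  have -> : b2 * ((b1 + b2) * (a1 + u) - (a1 + a2) * (b1 + x)) =
     (b1 + b2) * (b2 * u - a2 * x) + (b2 - x) * (a1 * b2 - a2 * b1) by ring.
  apply: addr_ge0; apply: mulr_ge0; rewrite ?subr_ge0 //; lra.
by rewrite pmulr_rge0 // subr_ge0.
Qed.
End Alg.

Section Alg2.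
Variable R : realFieldType.
Lemma alg3 (x X al be t : R) : 0 <= x -> x <= X -> 0 <= al -> be <= al ->
  (be + t * X) * x <= X * (al + t * x).
Proof.
move=> h1 h2 h3 h4.
have : 0 <= (X - x) * al + x * (al - be).
  apply: addr_ge0; apply: mulr_ge0; lra.
move=> H; rewrite -subr_ge0.
have -> : X * (al + t * x) - (be + t * X) * x = (X - x) * al + x * (al - be) by ring.
by [].
Qed.

Lemma alg4 (A' Ac Ab G' Bc Gb : R) : 0 < G' -> 0 < Bc -> 0 < Gb ->
  A' * Bc <= Ac * G' -> Ac * Gb < Ab * Bc -> A' * Gb <= Ab * G'.
Proof.
move=> h1 h2 h3 H1 H2.
have : Bc * (A' * Gb - Ab * G') <= 0.
  have -> : Bc * (A' * Gb - Ab * G') = Gb * (A' * Bc - Ac * G') + G' * (Ac * Gb - Ab * Bc) by ring.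
  rewrite -[0]addr0; apply: lerD.
    by rewrite pmulr_rle0 // subr_le0.
  by rewrite pmulr_rle0 // subr_le0 ltW.
by rewrite pmulr_rle0 // subr_le0.
Qed.
End Alg2.

Fixpoint AllP (T : Type) (P : T -> Prop) (l : seq T) : Prop :=
  match l with [::] => True | x :: l' => P x /\ AllP P l' end.

Lemma AllP_cat T (P : T -> Prop) A B : AllP P (A ++ B) <-> AllP P A /\ AllP P B.
Proof. elim: A => [|x A IH] /=; first by intuition. rewrite IH; intuition. Qed.

Section Main.
Variable R : realFieldType.
Variables (n : nat) (y w : nat -> R).
Hypothesis wpos : forall i, (i < n)%N -> 0 < w i.

Definition PF (f : nat -> R) k := \sum_(0 <= j < k) f j.
Definition FY := PF (fun j => w j * y j).
Definition GW := PF w.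
Definition aa s e := FY e.+1 - FY s.
Definition gg s e := GW e.+1 - GW s.
Definition good s e := forall c, (s <= c <= e)%N -> aa s e * gg s c <= gg s e * aa s c.
Definition ok (b : blk R) := [/\ ba b = aa (bp b) (bq b), bb b = gg (bp b) (bq b) & good (bp b) (bq b)].

Lemma bsumE f p q : (p <= q.+1)%N -> bsum p q f = PF f q.+1 - PF f p.
Proof.
move=> H; rewrite /bsum /PF (@big_cat_nat _ _ _ p 0 q.+1 _ _ (leq0n p) H) /=.
by rewrite addrC addrK.
Qed.

Lemma PFS f k : PF f k.+1 = PF f k + f k.
Proof. by rewrite /PF big_nat_recr. Qed.

Lemma GW_le i j : (i <= j)%N -> (j <= n)%N -> GW i <= GW j.
Proof.
elim: j => [|j IH] Hij Hj; first by rewrite leqn0 in Hij; rewrite (eqP Hij).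
case: (ltngtP i j.+1) Hij => // [Hl|->] _ //.
rewrite /GW PFS; apply: le_trans (IH Hl (ltnW Hj)) _.
by rewrite lerDl ltW // wpos.
Qed.

Lemma GW_lt i j : (i < j)%N -> (j <= n)%N -> GW i < GW j.
Proof.
case: j => // j Hij Hj.
have H1 : GW i <= GW j by apply: GW_le => //; lia.
rewrite /GW PFS; apply: le_lt_trans H1 _.
by rewrite /GW ltrDl wpos.
Qed.

Lemma gg_gt0 s e : (s <= e)%N -> (e < n)%N -> 0 < gg s e.
Proof. by move=> H1 H2; rewrite subr_gt0 GW_lt. Qed.

Lemma gg_ge0 s e : (s <= e.+1)%N -> (e < n)%N -> 0 <= gg s e.
Proof. by move=> H1 H2; rewrite subr_ge0 GW_le. Qed.

Lemma good_merge s m e : (s <= m)%N -> (m < e)%N -> (e < n)%N ->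
  good s m -> good m.+1 e -> aa m.+1 e * gg s m <= aa s m * gg m.+1 e -> good s e.
Proof.
move=> Hsm Hme Hen G1 G2 H c /andP[Hsc Hce].
have E1 : aa s e = aa s m + aa m.+1 e by rewrite /aa; ring.
have E2 : gg s e = gg s m + gg m.+1 e by rewrite /gg; ring.
have P1 : 0 < gg s m by apply: gg_gt0 => //; lia.
have P2 : 0 < gg m.+1 e by apply: gg_gt0 => //; lia.
rewrite E1 E2.
case: (leqP c m) => Hcm.
  apply: alg1 => //; first by apply: gg_ge0; lia.
  by apply: G1; rewrite Hsc Hcm.
have E3 : aa s c = aa s m + aa m.+1 c by rewrite /aa; ring.
have E4 : gg s c = gg s m + gg m.+1 c by rewrite /gg; ring.
rewrite E3 E4; apply: alg2 => //.
  by rewrite /gg lerD2r GW_le.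
by apply: G2; rewrite Hcm Hce.
Qed.

Lemma ok_pos b : ok b -> (bq b < n)%N -> (bp b <= bq b)%N -> 0 < bb b.
Proof. by case=> _ -> _ H1 H2; apply: gg_gt0. Qed.

Lemma mu_lt (b c : blk R) : 0 < bb b -> 0 < bb c ->
  (mu c < mu b) = (ba c * bb b < ba b * bb c).
Proof.
move=> Hb Hc; rewrite /mu ltr_pdivrMr // mulrAC ltr_pdivlMr //.
Qed.

Lemma run_ok r : forall b k m, valid_from k m (parts (b :: r)) -> (m <= n)%N ->
  AllP ok (b :: r) -> path (@dec R) b r ->
  [/\ (k < m)%N /\ bp b = k, bq (last b r) = m.-1,
      \sum_(c <- b :: r) ba c = aa k m.-1 /\ \sum_(c <- b :: r) bb c = gg k m.-1,
      good k m.-1 & aa k m.-1 * bb b <= ba b * gg k m.-1].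
Proof.
elim: r => [|c r IH] b k m.
  rewrite /=; case/and3P=> /eqP Hk Hpq /eqP Hm Hmn [[Ha Hb Hg] _] _.
  subst; rewrite /= !big_cons !big_nil !addr0 Ha Hb; split => //.
rewrite (_ : parts (b :: c :: r) = (bp b, bq b) :: parts (c :: r)) // [valid_from _ _ _]/=.
case/and3P=> /eqP Hk Hpq Hv Hmn [[Ha Hb Hg] Hok] /andP[Hd Hp].
have [[Hlt Hpc] Hlast [Hs1 Hs2] Hgood Hmean] := IH c _ _ Hv Hmn Hok Hp.
have Hbq : (bq b < n)%N by lia.
have Pb : 0 < bb b by rewrite Hb; apply: gg_gt0.
case: Hok => [[Hac Hbc Hgc] _].
have Hcq : (bq c < n)%N.
  move: Hv; rewrite /=; case/and3P=> _ _ /vf_le; lia.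
have Hcpq : (bp c <= bq c)%N by move: Hv; rewrite /=; case/and3P.
have Pc : 0 < bb c by rewrite Hbc; apply: gg_gt0.
have Pg : 0 < gg (bq b).+1 m.-1 by apply: gg_gt0; lia.
move: Hd; rewrite /dec mu_lt // => Hd.
have Hm2 : aa (bq b).+1 m.-1 * bb b <= ba b * gg (bq b).+1 m.-1.
  by apply: alg4 Hmean Hd.
have Ea : aa k m.-1 = aa k (bq b) + aa (bq b).+1 m.-1 by rewrite /aa; ring.
have Eg : gg k m.-1 = gg k (bq b) + gg (bq b).+1 m.-1 by rewrite /gg; ring.
subst k; split => //; first (split=> //; lia).
- by split; rewrite big_cons ?Hs1 ?Hs2 ?Ha ?Hb ?Ea ?Eg.
- apply: good_merge Hg Hgood _ => //; try lia.
  by rewrite -Hb -Ha.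
- rewrite Ea Eg -Ha -Hb; nra.
Qed.

Lemma merge_ok b r k m : valid_from k m (parts (b :: r)) -> (m <= n)%N ->
  AllP ok (b :: r) -> path (@dec R) b r ->
  [/\ ok (merge_run (b :: r)), bp (merge_run (b :: r)) = k,
      bq (merge_run (b :: r)) = m.-1 & (k < m)%N].
Proof.
move=> Hv Hm Ho Hp.
have [[Hlt Hk] Hl [S1 S2] Hg _] := run_ok Hv Hm Ho Hp.
case: r Hv Ho Hp Hl S1 S2 => [|c r] Hv Ho Hp Hl S1 S2.
  by case: Ho => Hb _; rewrite /=; split.
rewrite /merge_run; split => //.
by split; rewrite /= ?Hk ?Hl.
Qed.

Lemma step_ok (gs : seq (seq (blk R))) k :
  valid_from k n (parts (flatten gs)) -> AllP ok (flatten gs) -> GroupsOK gs ->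
  valid_from k n (parts (map (@merge_run R) gs)) /\ AllP ok (map (@merge_run R) gs).
Proof.
elim: gs k => [|r gs IH] k //=.
rewrite /parts map_cat -/(parts _) -/(parts _) AllP_cat.
move=> /vf_cat_inv [m [Hv1 Hv2]] [Ho1 Ho2] [[b [r' [Er Hp]]] Hg].
subst r.
have Hmn := vf_le Hv2.
have [Hok Hbp Hbq Hkm] := merge_ok Hv1 Hmn Ho1 Hp.
have [IH1 IH2] := IH _ Hv2 Ho2 Hg.
split=> //.
rewrite Hbp Hbq eqxx /= (prednK (leq_ltn_trans (leq0n k) Hkm)) IH1 andbT.
by rewrite -ltnS (prednK (leq_ltn_trans (leq0n k) Hkm)).
Qed.

Definition Inv (J : seq (blk R)) := valid_from 0 n (parts J) /\ AllP ok J.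

Lemma Inv_step J : Inv J -> Inv (pdas_step J).
Proof.
case=> Hv Ho; have [Hf Hg] := runs_flat J.
rewrite -Hf in Hv Ho; exact: step_ok Hv Ho Hg.
Qed.

Lemma sum_wyt p c t : (p <= c.+1)%N ->
  \sum_(p <= j < c.+1) w j * (y j - t) = aa p c - t * gg p c.
Proof.
move=> H.
rewrite (eq_bigr (fun j => w j * y j - t * w j)); last by move=> j _; ring.
rewrite sumrB -mulr_sumr.
rewrite -/(bsum p c (fun j => w j * y j)) -/(bsum p c w) !bsumE //.
Qed.

Section Cut.
Variables p q : nat.
Hypothesis Hpq : (p <= q)%N.
Hypothesis Hqn : (q < n)%N.
Definition th := theta0 y w (p, q).
Definition Sc c := aa p c - th * gg p c.

Lemma th_E : th = aa p q / gg p q.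
Proof. by rewrite /th /theta0 /= !bsumE ?(leqW Hpq). Qed.

Lemma Sq : Sc q = 0.
Proof.
rewrite /Sc th_E divfK ?subrr //.
by apply: lt0r_neq0; apply: gg_gt0.
Qed.

Lemma zval_S i : (p <= i)%N -> (i < q)%N -> zval n y w (p, q) i = Sc i.
Proof.
move=> H1 H2; rewrite /zval /= (_ : (i == q) = false); last by apply/eqP; lia.
by rewrite sum_wyt //; lia.
Qed.

Definition Acond s := s = p \/ ((p < s)%N /\ Sc s.-1 <= 0).

Lemma A_exists s : (p <= s)%N -> Acond s ->
  exists A, A <= 0 /\ forall c, aa s c - th * gg s c = Sc c - A.
Proof.
move=> Hs [->|[Hlt HA]].
  by exists 0; split => // c; rewrite subr0.
exists (Sc s.-1); split => // c.
rewrite /Sc /aa /gg (prednK (leq_ltn_trans (leq0n p) Hlt)); ring.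
Qed.

Lemma good_cut s e : (p <= s)%N -> (s <= e)%N -> (e <= q)%N -> Acond s ->
  (forall c, (s <= c < e)%N -> 0 <= Sc c) -> Sc e <= 0 -> good s e.
Proof.
move=> H1 H2 H3 HA Hnc He c /andP[Hsc Hce].
case: (ltngtP c e) Hce => // [Hlt|->] _; last by rewrite mulrC.
have [A [HA0 HAe]] := A_exists H1 HA.
have Ee : aa s e = (Sc e - A) + th * gg s e by rewrite -HAe; ring.
have Ec : aa s c = (Sc c - A) + th * gg s c by rewrite -HAe; ring.
have Sc := Hnc c (introT andP (conj Hsc Hlt)).
rewrite Ee Ec; apply: alg3.
- by apply: gg_ge0; lia.
- by rewrite /gg lerD2r; apply: GW_le; lia.
- lra.
- lra.
Qed.

Lemma cut_ok m : forall s i, (p <= s)%N -> (s <= i)%N -> (i + m = q)%N -> Acond s ->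
  (forall c, (s <= c < i)%N -> 0 <= Sc c) ->
  valid_from s q.+1 (cutb (fun i => zval n y w (p, q) i < 0) s q (iota i m)) /\
  AllP (fun B => good B.1 B.2) (cutb (fun i => zval n y w (p, q) i < 0) s q (iota i m)).
Proof.
elim: m => [|m IH] s i H1 H2 H3 HA Hnc.
  rewrite addn0 in H3; subst i.
  rewrite /= eqxx H2 eqxx; split => //; split => //.
  by apply: good_cut => //; rewrite Sq.
rewrite /= zval_S; try lia.
case: ifP => Hz.
  have E1 : (i.+1 + m = q)%N by rewrite addSnnS.
  have E2 : Acond i.+1 by right; split; [lia | exact: ltW].
  have E3 : forall c, (i.+1 <= c < i.+1)%N -> 0 <= Sc c by move=> c; lia.
  have [IH1 IH2] := IH i.+1 i.+1 (ltac:(lia)) (leqnn _) E1 E2 E3.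
  rewrite /= eqxx H2 IH1; split => //; split => //.
  apply: good_cut => //; try lia; last exact: ltW.
have Si : 0 <= Sc i by rewrite leNgt Hz.
apply: IH => //; first lia.
  by rewrite addSnnS.
move=> c /andP[Hc1 Hc2]; case: (ltngtP c i) => [Hci|Hci|->] //.
- by apply: Hnc; rewrite Hc1 Hci.
- lia.
Qed.

Lemma cut_block_ok :
  valid_from p q.+1 (cut_block n y w (p, q)) /\ AllP (fun B => good B.1 B.2) (cut_block n y w (p, q)).
Proof.
rewrite /cut_block /=; apply: cut_ok => //; first lia.
  by left.
move=> c; lia.
Qed.
End Cut.

Lemma J1_ok J0 k : valid_from k n J0 ->
  valid_from k n (J1 n y w J0) /\ AllP (fun B => good B.1 B.2) (J1 n y w J0).
Proof.
elim: J0 k => [|[p q] J0 IH] k //=.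
case/and3P=> /eqP Hk Hpq Hv.
have Hqn : (q < n)%N by have := vf_le Hv; lia.
have [IH1 IH2] := IH _ Hv.
have [C1 C2] := cut_block_ok Hpq Hqn.
rewrite -/(J1 n y w J0) AllP_cat; subst k; split; last by split.
exact: vf_cat C1 IH1.
Qed.

Lemma init_ok P k : valid_from k n P -> AllP (fun B => good B.1 B.2) P ->
  valid_from k n (parts (map (init_blk y w) P)) /\ AllP ok (map (init_blk y w) P).
Proof.
elim: P k => [|[p q] P IH] k //=.
case/and3P=> /eqP Hk Hpq Hv [Hg Ho].
have [IH1 IH2] := IH _ Hv Ho.
subst k; rewrite eqxx Hpq IH1; split => //; split => //.
by split => //=; rewrite bsumE //; apply: leqW.
Qed.

Lemma mono_ok (J : seq (blk R)) k : valid_from k n (parts J) ->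
  sorted (fun a c => ~~ dec a c) J ->
  forall i, (k <= i)%N -> (i.+1 < n)%N -> theta_of J i <= theta_of J i.+1.
Proof.
elim: J k => [|b J IH] k //=.
case/and3P=> /eqP Hk Hpq Hv Hs i Hi Hin.
case: (ltngtP i (bq b)) => [Hlt|Hgt|Heq].
- by [].
- apply: (IH (bq b).+1) => //; exact: path_sorted Hs.
- subst i.
  case: J IH Hv Hs => [|c J] IH Hv Hs; first by move: Hv => /= /eqP; lia.
  move: Hv => /= /and3P[/eqP Hc Hcq _]; rewrite -Hc Hcq.
  by move: Hs => /= /andP[Hd _]; rewrite /dec -leNgt in Hd.
Qed.

Lemma ok_mean b c : ok b -> (bq b < n)%N -> (bp b <= c <= bq b)%N ->
  0 <= aa (bp b) c - mu b * gg (bp b) c /\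
  (c = bq b -> aa (bp b) c - mu b * gg (bp b) c = 0).
Proof.
case=> Ha Hb Hg Hn /andP[H1 H2].
have P : 0 < gg (bp b) (bq b) by apply: gg_gt0 => //; lia.
rewrite /mu Ha Hb; split; last first.
  by move=> ->; rewrite divfK ?subrr // lt0r_neq0.
rewrite subr_ge0 mulrAC ler_pdivrMr // mulrC [X in _ <= X]mulrC.
by rewrite mulrC; apply: Hg; rewrite H1 H2.
Qed.

Lemma lam_ok (J : seq (blk R)) k : valid_from k n (parts J) -> AllP ok J ->
  forall m, (k <= m)%N -> (m < n)%N ->
  0 <= \sum_(k <= j < m.+1) w j * (y j - theta_of J j) /\
  (\sum_(k <= j < m.+1) w j * (y j - theta_of J j) = 0 \/
   ((m.+1 < n)%N /\ theta_of J m = theta_of J m.+1)).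
Proof.
elim: J k => [|b J IH] k; first by move=> /= /eqP ->; lia.
rewrite [parts _]/= [valid_from _ _ _]/=.
case/and3P=> /eqP Hk Hpq Hv [Hob Ho] m Hkm Hmn.
have Hqn : (bq b < n)%N by have := vf_le Hv; lia.
have Efirst : forall c, (k <= c <= bq b)%N ->
    \sum_(k <= j < c.+1) w j * (y j - theta_of (b :: J) j) =
    aa k c - mu b * gg k c.
  move=> c /andP[Hc1 Hc2].
  rewrite -sum_wyt //; last lia.
  apply: eq_big_nat => j /andP[_ Hj] /=.
  by rewrite (_ : (j <= bq b)%N = true) //; lia.
case: (leqP m (bq b)) => Hmq.
  rewrite Efirst ?Hkm //.
  have [O1 O2] := ok_mean (c := m) Hob Hqn (ltac:(lia)).
  rewrite -Hk in O1 O2 *; split => //.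
  case: (ltngtP m (bq b)) Hmq => // [Hlt|Heq] _; last by left; apply: O2.
  right; split; first lia.
  by rewrite /= Hlt (ltnW Hlt).
have Hsplit := @big_cat_nat _ _ _ (bq b).+1 k m.+1 xpredT
   (fun j => w j * (y j - theta_of (b :: J) j)) (ltac:(lia)) (ltac:(lia)).
rewrite Hsplit /= Efirst; last lia.
have [_ O2] := ok_mean (c := bq b) Hob Hqn (ltac:(lia)).
rewrite Hk in O2; rewrite O2 // add0r.
have Erest : \sum_((bq b).+1 <= j < m.+1) w j * (y j - theta_of (b :: J) j) =
    \sum_((bq b).+1 <= j < m.+1) w j * (y j - theta_of J j).
  apply: eq_big_nat => j /andP[Hj _] /=.
  by rewrite (_ : (j <= bq b)%N = false) //; lia.
rewrite Erest; have [IH1 IH2] := IH _ Hv Ho m Hmq Hmn.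
split => //; case: IH2 => [->|[H1 H2]]; [by left | right; split => //].
by rewrite /= (_ : (m <= bq b)%N = false) 1?(_ : (m.+1 <= bq b)%N = false) //; lia.
Qed.

Lemma opt_ok (J : seq (blk R)) : valid_from 0 n (parts J) -> AllP ok J ->
  forall th, monotone n th -> ir_obj n y w (theta_of J) <= ir_obj n y w th.
Proof.
move=> Hv Ho th Hth.
set T := theta_of J.
set d := fun j => w j * (y j - T j).
have Habel : forall m, (m < n)%N ->
    \sum_(0 <= j < m.+1) d j * (th j - T j) <= (\sum_(0 <= j < m.+1) d j) * (th m - T m).
  elim=> [|m IH] Hm; first by rewrite !big_nat1.
  rewrite !(@big_nat_recr _ _ _ m.+1 0) //=.
  have [L1 L2] := lam_ok Hv Ho (leq0n m) (ltnW Hm).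
  rewrite -/T in L1 L2.
  apply: le_trans (lerD (IH (ltnW Hm)) (lexx _)) _.
  rewrite mulrDl lerD2r.
  case: L2 => [->|[_ HT]]; first by rewrite !mul0r.
  apply: ler_wpM2l => //.
  rewrite -/T HT lerD2r; exact: Hth.
have Hkey : \sum_(i < n) d i * (th i - T i) <= 0.
  case: (posnP n) => [Hn0|Hnpos].
    by rewrite Hn0 big_ord0.
  rewrite -(big_mkord xpredT (fun i => d i * (th i - T i))) -(prednK Hnpos).
  have Hn1 : (n.-1 < n)%N by rewrite prednK.
  apply: le_trans (Habel n.-1 Hn1) _.
  have [_ L2] := lam_ok Hv Ho (leq0n n.-1) Hn1.
  rewrite -/T in L2.
  by case: L2 => [->|[]]; [rewrite mul0r | rewrite prednK // ltnn].
rewrite /ir_obj ler_pM2r ?invr_gt0 ?ltr0n // -subr_ge0 -sumrB.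
have : 0 <= \sum_(i < n) - (2 * (d i * (th i - T i))).
  by rewrite sumrN oppr_ge0 -mulr_sumr pmulr_rle0 ?ltr0n.
move/le_trans; apply; apply: ler_sum => i _.
rewrite /d -subr_ge0.
have -> : w i * (y i - th i) ^+ 2 - w i * (y i - T i) ^+ 2 -
   - (2 * (w i * (y i - T i) * (th i - T i))) = w i * (th i - T i) ^+ 2 by ring.
by apply: mulr_ge0; [apply: ltW; apply: wpos | apply: sqr_ge0].
Qed.
End Main.

Section Iter.
Variable R : realFieldType.

Lemma iter_ok m : forall J : seq (blk R), (size J <= m)%N ->
  exists K, (forall k, (k < K)%N ->
      parts (pdas_step (iter k (@pdas_step R) J)) <> parts (iter k (@pdas_step R) J)) /\
    parts (pdas_step (iter K (@pdas_step R) J)) = parts (iter K (@pdas_step R) J) /\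
    (\sum_(k < K.+1) cost_step (iter k (@pdas_step R) J) <= 3 * size J)%N.
Proof.
elim: m => [|m IH] J Hs.
  case: J Hs => // _; exists 0%N; split => //; split => //.
  by rewrite big_ord_recl big_ord0.
have Hc := cost_runs J.
have Hsz : size (pdas_step J) = size (runs J) by rewrite /pdas_step size_map.
case: (boolP (parts (pdas_step J) == parts J)) => [/eqP He|Hne].
  exists 0%N; split => //; split => //.
  rewrite big_ord_recl big_ord0 /= addn0.
  have : size (runs J) = size J.
    by rewrite -Hsz -(size_map (fun b => (bp b, bq b))) -/(parts _) He /parts size_map.
  lia.
have Hlt : (size (runs J) < size J)%N.
  have := runs_size J; rewrite leq_eqVlt; case/orP => // /eqP Heq.
  have [E _] := runs_eq Heq.
  by move: Hne; rewrite /pdas_step E eqxx.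
have Hs' : (size (pdas_step J) <= m)%N by rewrite Hsz; lia.
have [K [H1 [H2 H3]]] := IH (pdas_step J) Hs'.
exists K.+1; split.
  case=> [_|k Hk]; first by move/eqP: Hne.
  by rewrite iterSr; apply: H1.
split; first by rewrite iterSr.
rewrite big_ord_recl /=.
under eq_bigr => i _ do rewrite add0n -iterS iterSr.
apply: leq_trans Hc; rewrite leq_add2l; move: H3; rewrite Hsz; exact.
Qed.

Lemma Inv_iter n y w (wpos : forall i, (i < n)%N -> 0 < w i) k (J : seq (blk R)) :
  Inv n y w J -> Inv n y w (iter k (@pdas_step R) J).
Proof. by elim: k => //= k IH HJ; apply: Inv_step => //; apply: IH. Qed.
End Iter.

Theorem theorem3p2 :
  exists C : nat,
  forall (R : realFieldType) (n : nat) (y w : nat -> R) (J0 : seq (nat * nat)),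
    (1 <= n)%N ->
    (forall i : nat, (i < n)%N -> 0 < w i) ->
    is_partition n J0 ->
    exists K : nat,
      (forall k : nat, (k < K)%N ->
         parts (pdas_step (Jk n y w J0 k)) <> parts (Jk n y w J0 k)) /\
      parts (pdas_step (Jk n y w J0 K)) = parts (Jk n y w J0 K) /\
      monotone n (theta_of (Jk n y w J0 K)) /\
      (forall th : nat -> R, monotone n th ->
         ir_obj n y w (theta_of (Jk n y w J0 K)) <= ir_obj n y w th) /\
      (total_cost n y w J0 K <= C * n)%N.
Proof.
exists 17%N => R n y w J0 Hn wpos HJ0.
rewrite /is_partition in HJ0.
set J := map (init_blk y w) (J1 n y w J0).
have [V1 G1] := J1_ok y wpos HJ0.
have [V2 O2] := init_ok V1 G1.
have HInv : Inv n y w J by split.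
have [K [H1 [H2 H3]]] := iter_ok (leqnn (size J)).
have EJk : forall k, Jk n y w J0 k = iter k (@pdas_step R) J by [].
exists K.
have [V3 O3] := Inv_iter wpos K HInv.
split; first by move=> k Hk; rewrite EJk; apply: H1.
split; first by rewrite EJk.
have Hsz : size (runs (iter K (@pdas_step R) J)) = size (iter K (@pdas_step R) J).
  have := congr1 size H2.
  by rewrite /parts /pdas_step !size_map.
have [_ Hsort] := runs_eq Hsz.
split; first by move=> i Hi; rewrite EJk; apply: (mono_ok V3 Hsort).
split; first by move=> th Hth; rewrite EJk; apply: opt_ok.
have H3' : (\sum_(k < K.+1) cost_step (Jk n y w J0 k) <= 3 * size J)%N := H3.
have C1 : (sumn (map cost1_block J0) <= 7 * (n - 0))%N.
  by apply: vf_cost HJ0 => [[p q]] /= _; rewrite /cost1_block /=; lia.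
have C2 : (sumn (map cost3_block (J1 n y w J0)) <= 7 * (n - 0))%N.
  by apply: vf_cost V1 => [[p q]] /= _; rewrite /cost3_block /=; lia.
have C3 := vf_size V1.
have C4 : size J = size (J1 n y w J0) by rewrite size_map.
rewrite /total_cost; lia.
Qed.
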